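(* Let $G$ be an étale groupoid and let $F\subset G^{(0)}$ be an open $G$-full subset. (1) If there is a continuous map $\theta:G^{(0)}\to G$ with $r(\theta(x))=x$ and $s(\theta(x))\in F$ for all $x\in G^{(0)}$, then $G$ is homologically similar to $G|F$. (2) If $G^{(0)}$ is $\sigma$-compact and totally disconnected, then $G$ is homologically similar to $G|F$.
   Context: An étale groupoid is a locally compact Hausdorff groupoid whose range map $r$ is a local homeomorphism; $s$ is the source map. $F\subset G^{(0)}$ is $G$-full if for every $x\in G^{(0)}$ there is $g$ with $r(g)=x$, $s(g)\in F$. $G|F=r^{-1}(F)\cap s^{-1}(F)$ is the reduction (an étale subgroupoid). A homomorphism is a continuous map preserving products of composable pairs; it is étale if it is a local homeomorphism. Homomorphisms $\rho,\sigma:G\to H$ are similar if there is continuous $\theta:G^{(0)}\to H$ with $\theta(r(g))\rho(g)=\sigma(g)\theta(s(g))$ for all $g$. $G,H$ are homologically similar if there are étale homomorphisms $\rho:G\to H$, $\sigma:H\to G$ with $\sigma\circ\rho$ similar to $\mathrm{id}_G$ and $\rho\circ\sigma$ similar to $\mathrm{id}_H$. *)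

(* Defs.v *)
(* Étale groupoids whose arrow space is a subset
   [garr G] of an ambient topological type, with the subspace topology. *)
From HB Require Import structures.
From mathcomp Require Import all_boot all_order all_algebra.
From mathcomp Require Import all_classical all_reals all_analysis.
Set Implicit Arguments. Unset Strict Implicit. Unset Printing Implicit Defensive.
Local Open Scope classical_set_scope.

Record groupoid_data (T : topologicalType) := GroupoidData {
  garr : set T;
  grg : T -> T;
  gsr : T -> T;
  gmul : T -> T -> T;
  ginv : T -> T }.

Section Defs.
Context {T : topologicalType}.
Implicit Types G : groupoid_data T.

Definition units G : set T := grg G @` garr G.

Definition composable G (g h : T) :=
  garr G g /\ garr G h /\ gsr G g = grg G h.

Definition is_groupoid G :=
  [/\ (forall g, garr G g ->
        [/\ garr G (grg G g), garr G (gsr G g),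
            grg G (grg G g) = grg G g /\ gsr G (grg G g) = grg G g &
            grg G (gsr G g) = gsr G g /\ gsr G (gsr G g) = gsr G g]),
      (forall g h, composable G g h ->
        [/\ garr G (gmul G g h), grg G (gmul G g h) = grg G g
          & gsr G (gmul G g h) = gsr G h]),
      (forall g h k, composable G g h -> composable G h k ->
        gmul G (gmul G g h) k = gmul G g (gmul G h k)),
      (forall g, garr G g ->
        gmul G (grg G g) g = g /\ gmul G g (gsr G g) = g) &
      (forall g, garr G g ->
        [/\ garr G (ginv G g), grg G (ginv G g) = gsr G g,
            gsr G (ginv G g) = grg G g,
            gmul G g (ginv G g) = grg G g & gmul G (ginv G g) g = gsr G g])].

Definition rel_open (A U : set T) := exists2 V, open V & U = V `&` A.

Definition loc_compact_in (A : set T) :=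
  forall x, A x -> exists U K, [/\ open U, U x, compact K,
                                   U `&` A `<=` K & K `<=` A].

Definition is_topological_groupoid G :=
  [/\ is_groupoid G,
      {within garr G, continuous grg G},
      {within garr G, continuous gsr G},
      {within garr G, continuous ginv G} &
      {within [set p : T * T | composable G p.1 p.2],
         continuous (fun p => gmul G p.1 p.2)}].
End Defs.

Definition local_homeo_in {T T' : topologicalType} (A : set T) (B : set T')
    (f : T -> T') :=
  [/\ f @` A `<=` B,
      {within A, continuous f} &
      forall x, A x -> exists U : set T,
        [/\ open U, U x,
            {in U `&` A &, injective f} &
            forall W : set T, open W -> rel_open B (f @` (W `&` U `&` A))]].

Definition etale_groupoid {T : topologicalType} (G : groupoid_data T) :=
  [/\ is_topological_groupoid G,
      hausdorff_space (subspace (garr G)),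
      loc_compact_in (garr G) &
      local_homeo_in (garr G) (units G) (grg G)].

Definition full {T : topologicalType} (G : groupoid_data T) (F : set T) :=
  forall x, units G x -> exists g, [/\ garr G g, grg G g = x & F (gsr G g)].

Definition reduction {T : topologicalType} (G : groupoid_data T) (F : set T) :=
  GroupoidData (garr G `&` (grg G @^-1` F) `&` (gsr G @^-1` F))
               (grg G) (gsr G) (gmul G) (ginv G).

Definition homomorphism {T T' : topologicalType} (G : groupoid_data T)
    (H : groupoid_data T') (rho : T -> T') :=
  [/\ rho @` garr G `<=` garr H,
      {within garr G, continuous rho} &
      forall g h, composable G g h ->
        composable H (rho g) (rho h) /\
        rho (gmul G g h) = gmul H (rho g) (rho h)].

Definition etale_homomorphism {T T' : topologicalType} (G : groupoid_data T)
    (H : groupoid_data T') (rho : T -> T') :=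
  homomorphism G H rho /\ local_homeo_in (garr G) (garr H) rho.

Definition similar {T T' : topologicalType} (G : groupoid_data T)
    (H : groupoid_data T') (rho sigma : T -> T') :=
  exists theta : T -> T',
    [/\ {within units G, continuous theta},
        theta @` units G `<=` garr H &
        forall g, garr G g ->
          [/\ composable H (theta (grg G g)) (rho g),
              composable H (sigma g) (theta (gsr G g)) &
              gmul H (theta (grg G g)) (rho g) =
              gmul H (sigma g) (theta (gsr G g))]].

Definition homologically_similar {T T' : topologicalType}
    (G : groupoid_data T) (H : groupoid_data T') :=
  exists (rho : T -> T') (sigma : T' -> T),
    [/\ etale_homomorphism G H rho, etale_homomorphism H G sigma,
        similar G G (sigma \o rho) id & similar H H (rho \o sigma) id].

Definition sigma_compact {T : topologicalType} (A : set T) :=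
  exists K : nat -> set T, (forall n, compact (K n) /\ K n `<=` A) /\
    A = \bigcup_n K n.

(* Main.v *)
Require Import Defs.
From HB Require Import structures.
From mathcomp Require Import all_boot all_order all_algebra.
From mathcomp Require Import all_classical all_reals all_analysis.
From Stdlib Require List.
Local Open Scope classical_set_scope.
Set Implicit Arguments. Unset Strict Implicit.

Definition ctn {T U : topologicalType} (A : set T) (f : T -> U) (x : T) :=
  forall V, open V -> V (f x) ->
    exists Q, [/\ open Q, Q x & forall y, A y -> Q y -> V (f y)].

Lemma ctnP {T U : topologicalType} (A : set T) (f : T -> U) :
  {within A, continuous f} <-> forall x, A x -> ctn A f x.
Proof.
rewrite subspace_continuousP; split.
  move=> H x Ax V oV Vfx.
  have Hn : nbhs (f x) V by apply: open_nbhs_nbhs; split.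
  have := H x Ax V Hn; rewrite nbhs_simpl /=.
  rewrite /within /= nbhsE => -[B [oB Bx] BV].
  by exists B; split => // y Ay By; apply: BV.
move=> H x Ax Y.
rewrite nbhsE => -[B [oB Bfx] BW].
have [Q [oQ Qx QV]] := H x Ax B oB Bfx.
rewrite nbhs_simpl /= /within /=; rewrite nbhsE; exists Q; first by split.
by move=> y Qy Ay; apply: BW; apply: QV.
Qed.

Section Top.
Context {T U W : topologicalType}.

Lemma ctn_sub (A B : set T) (f : T -> U) x : B `<=` A -> ctn A f x -> ctn B f x.
Proof.
move=> BA H V oV Vx; have [Q [oQ Qx QV]] := H V oV Vx.
by exists Q; split => // y /BA; apply: QV.
Qed.

Lemma ctn_comp (A : set T) (B : set U) (f : T -> U) (g : U -> W) x :
  (forall y, A y -> B (f y)) -> ctn A f x -> ctn B g (f x) ->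
  ctn A (g \o f) x.
Proof.
move=> AB cf cg V oV Vx; have [Q [oQ Qx QV]] := cg V oV Vx.
have [Q' [oQ' Qx' QV']] := cf Q oQ Qx.
by exists Q'; split => // y Ay Q'y /=; apply: QV; [apply: AB|apply: QV'].
Qed.

Lemma ctn_eq (A : set T) (f g : T -> U) x : A x ->
  (forall y, A y -> f y = g y) -> ctn A f x -> ctn A g x.
Proof.
move=> Ax e H V oV; rewrite -e // => Vx; have [Q [oQ Qx QV]] := H V oV Vx.
by exists Q; split => // y Ay Qy; rewrite -e //; apply: QV.
Qed.

Lemma ctn_id (A : set T) x : ctn A id x.
Proof. by move=> V oV Vx; exists V; split. Qed.

Lemma ctn_cst (A : set T) (u : U) x : ctn A (fun=> u) x.
Proof. by move=> V oV Vx; exists setT; split => //; exact: openT. Qed.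

Lemma ctn_local (A Q : set T) (f : T -> U) x : open Q -> Q x ->
  ctn (A `&` Q) f x -> ctn A f x.
Proof.
move=> oQ Qx H V oV Vx; have [P [oP Px PV]] := H V oV Vx.
exists (P `&` Q); split => //; first exact: openI.
by move=> y Ay [Py Qy]; apply: PV.
Qed.

Lemma ctn_pre (A : set T) (f : T -> U) V :
  (forall x, A x -> ctn A f x) -> open V ->
  exists Q, open Q /\ forall y, A y -> (Q y <-> V (f y)).
Proof.
move=> H oV.
pose S := [set P : set T | open P /\ forall y, A y -> P y -> V (f y)].
exists (\bigcup_(P in S) P); split.
  by apply: bigcup_open => P [].
move=> y Ay; split; first by case=> P [_ PV] Py; apply: PV.
move=> Vy; have [Q [oQ Qy QV]] := H y Ay V oV Vy.
by exists Q.
Qed.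

Lemma ctn_pair (C : set (T * U)) (h : T * U -> W) :
  {within C, continuous h} -> forall a b, C (a, b) ->
  forall V, open V -> V (h (a, b)) ->
  exists P Q, [/\ open P, open Q, P a, Q b &
     forall p, C p -> P p.1 -> Q p.2 -> V (h p)].
Proof.
move/ctnP => H a b Cab V oV Vh.
have [Q [oQ Qx QV]] := H _ Cab V oV Vh.
have : nbhs (a, b) Q by apply: open_nbhs_nbhs; split.
case=> -[P1 P2] /= [nP1 nP2] sub.
move: nP1; rewrite nbhsE => -[P1' [oP1' P1'a] P1P].
move: nP2; rewrite nbhsE => -[P2' [oP2' P2'b] P2P].
exists P1', P2'; split => // -[p1 p2] Cp /= P1p P2p.
by apply: QV => //; apply: sub; split => /=; [apply: P1P|apply: P2P].
Qed.
End Top.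

Lemma ctn_bin {T U W : topologicalType} (C : set (U * U)) (h : U * U -> W)
   (A : set T) (f g : T -> U) x :
  {within C, continuous h} -> (forall y, A y -> C (f y, g y)) -> A x ->
  ctn A f x -> ctn A g x -> ctn A (fun y => h (f y, g y)) x.
Proof.
move=> hc AC Ax cf cg V oV Vx.
have [P [Q [oP oQ Pa Qb PQ]]] := ctn_pair hc (AC x Ax) oV Vx.
have [P' [oP' P'x P'P]] := cf P oP Pa.
have [Q' [oQ' Q'x Q'Q]] := cg Q oQ Qb.
exists (P' `&` Q'); split => //; first exact: openI.
move=> y Ay [P'y Q'y]; apply: (PQ (f y, g y) (AC y Ay)) => /=.
  exact: P'P.
exact: Q'Q.
Qed.

Definition rel_open' {T : topologicalType} (A U : set T) := exists2 V, open V & U = V `&` A.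

Definition good {T U : topologicalType} (A : set T) (B : set U) (f : T -> U) (Q : set T) :=
  [/\ open Q, {in Q `&` A &, injective f} &
      forall W, open W -> exists2 V, open V & f @` (W `&` Q `&` A) = V `&` B].

Section Good.
Context {T U : topologicalType}.

Lemma good_restrict (A : set T) (B : set U) f Q P :
  good A B f Q -> open P -> good A B f (Q `&` P).
Proof.
case=> oQ inj op oP; split; first exact: openI.
  by move=> x y; rewrite !inE => -[[Qx _] Ax] [[Qy _] Ay]; apply: inj; rewrite inE.
move=> W oW; have [V oV e] := op (W `&` P) (openI oW oP).
exists V => //; rewrite -e; congr (_ @` _).
by apply/seteqP; split => x /=; tauto.
Qed.

Lemma linv (A : set T) (B : set U) (f : T -> U) Q (t0 : T) :
  good A B f Q -> (forall x, A x -> B (f x)) ->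
  exists h : U -> T, exists D : set U,
   [/\ open D,
       forall x, Q x -> A x -> D (f x) /\ h (f x) = x,
       forall y, B y -> D y -> [/\ Q (h y), A (h y) & f (h y) = y] &
       forall y, B y -> D y -> ctn (B `&` D) h y].
Proof.
case=> oQ inj op AB.
pose h y := match pselect (exists x, [/\ Q x, A x & f x = y]) with
  | left e => proj1_sig (cid e) | right _ => t0 end.
have hP y : (exists x, [/\ Q x, A x & f x = y]) -> [/\ Q (h y), A (h y) & f (h y) = y].
  move=> ex; rewrite /h; case: pselect => // e; by case: (cid e).
have [D oD eD] := op setT openT.
have DE y : B y -> D y -> exists x, [/\ Q x, A x & f x = y].
  move=> By Dy; have : (f @` (setT `&` Q `&` A)) y by rewrite eD.
  by case=> x [[_ Qx] Ax] <-; exists x.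
exists h, D; split => //.
- move=> x Qx Ax; have : (f @` (setT `&` Q `&` A)) (f x) by exists x.
  rewrite eD => -[Dfx _]; split => //.
  have [Qh Ah eh] := hP (f x) (ex_intro _ x (And3 Qx Ax erefl)).
  by apply: inj; rewrite ?inE.
- by move=> y By Dy; apply: hP; apply: DE.
move=> y By Dy W oW Why.
have [Qh Ah eh] := hP y (DE y By Dy).
have [P oP eP] := op W oW.
exists P; split => //.
  have : (f @` (W `&` Q `&` A)) y by exists (h y).
  by rewrite eP => -[].
move=> y' [By' Dy'] Py'.
have : (f @` (W `&` Q `&` A)) y' by rewrite eP.
case=> x [[Wx Qx] Ax] fx.
have [Qh' Ah' eh'] := hP y' (DE y' By' Dy').
suff -> : h y' = x by [].
by apply: inj; rewrite ?inE // eh' fx.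
Qed.

Lemma lh_inv (A : set T) (B : set U) (f : T -> U) x0 (Q : set T) (V : set U) (h : U -> T) :
  open Q -> Q x0 -> open V -> (forall x, A x -> B (f x)) ->
  (forall x, A x -> Q x -> V (f x) /\ h (f x) = x) ->
  (forall y, B y -> V y -> [/\ A (h y), Q (h y) & f (h y) = y]) ->
  (forall y, B y -> V y -> ctn (B `&` V) h y) ->
  exists U0 : set T, [/\ open U0, U0 x0, {in U0 `&` A &, injective f} &
    forall W : set T, open W -> exists2 V0, open V0 & f @` (W `&` U0 `&` A) = V0 `&` B].
Proof.
move=> oQ Qx0 oV AB H1 H2 H3.
exists Q; split => //.
  move=> x y; rewrite !inE => -[Qx Ax] [Qy Ay] e.
  by rewrite -(H1 x Ax Qx).2 e (H1 y Ay Qy).2.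
move=> W oW.
have [P [oP eP]] := ctn_pre (A := B `&` V) (f := h) (fun y '(conj By Vy) => H3 y By Vy) oW.
exists (P `&` V); first exact: openI.
apply/seteqP; split.
  move=> y [x [[Wx Qx] Ax] <-]; have [Vf hf] := H1 x Ax Qx.
  split; last exact: AB.
  split => //; apply/(eP (f x)); first by split => //; apply: AB.
  by rewrite hf.
move=> y [[Py Vy] By]; have [Ah Qh fh] := H2 y By Vy.
exists (h y) => //; split => //; split => //.
by apply/(eP y).
Qed.
End Good.


Section Alg.
Context {T : topologicalType} (G : groupoid_data T) (hg : is_groupoid G).
Local Notation A := (garr G).
Local Notation r := (grg G).
Local Notation s := (gsr G).
Local Notation m := (gmul G).
Local Notation i := (ginv G).

Lemma a_r g : A g -> A (r g). Proof. by case: hg => h _ _ _ _ /h []. Qed.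
Lemma a_s g : A g -> A (s g). Proof. by case: hg => h _ _ _ _ /h []. Qed.
Lemma r_r g : A g -> r (r g) = r g. Proof. by case: hg => h _ _ _ _ /h [_ _ []]. Qed.
Lemma s_r g : A g -> s (r g) = r g. Proof. by case: hg => h _ _ _ _ /h [_ _ []]. Qed.
Lemma r_s g : A g -> r (s g) = s g. Proof. by case: hg => h _ _ _ _ /h [_ _ _ []]. Qed.
Lemma s_s g : A g -> s (s g) = s g. Proof. by case: hg => h _ _ _ _ /h [_ _ _ []]. Qed.

Lemma a_m g h : composable G g h -> A (m g h). Proof. by case: hg => _ H _ _ _ /H []. Qed.
Lemma r_m g h : composable G g h -> r (m g h) = r g. Proof. by case: hg => _ H _ _ _ /H []. Qed.
Lemma s_m g h : composable G g h -> s (m g h) = s h. Proof. by case: hg => _ H _ _ _ /H []. Qed.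
Lemma m_assoc g h k : composable G g h -> composable G h k ->
  m (m g h) k = m g (m h k). Proof. by case: hg => _ _ H _ _; apply: H. Qed.
Lemma m_rl g : A g -> m (r g) g = g. Proof. by case: hg => _ _ _ H _ /H []. Qed.
Lemma m_sr g : A g -> m g (s g) = g. Proof. by case: hg => _ _ _ H _ /H []. Qed.
Lemma a_i g : A g -> A (i g). Proof. by case: hg => _ _ _ _ H /H []. Qed.
Lemma r_i g : A g -> r (i g) = s g. Proof. by case: hg => _ _ _ _ H /H []. Qed.
Lemma s_i g : A g -> s (i g) = r g. Proof. by case: hg => _ _ _ _ H /H []. Qed.
Lemma m_gi g : A g -> m g (i g) = r g. Proof. by case: hg => _ _ _ _ H /H []. Qed.
Lemma m_ig g : A g -> m (i g) g = s g. Proof. by case: hg => _ _ _ _ H /H []. Qed.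

Lemma units_a x : units G x -> A x. Proof. by case=> g Ag <-; apply: a_r. Qed.
Lemma units_r x : units G x -> r x = x. Proof. by case=> g Ag <-; apply: r_r. Qed.
Lemma units_s x : units G x -> s x = x. Proof. by case=> g Ag <-; apply: s_r. Qed.
Lemma r_units g : A g -> units G (r g). Proof. by move=> Ag; exists g. Qed.
Lemma s_units g : A g -> units G (s g).
Proof. by move=> Ag; exists (s g); [apply: a_s | apply: r_s]. Qed.

Lemma cmp g h : A g -> A h -> s g = r h -> composable G g h.
Proof. by move=> *; split. Qed.

Lemma i_i g : A g -> i (i g) = g.
Proof.
move=> Ag.
have Aig := a_i Ag; have Aiig := a_i Aig.
have c1 : composable G g (i g) by apply: cmp => //; rewrite r_i.
have c2 : composable G (i g) (i (i g)) by apply: cmp => //; rewrite r_i // s_i.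
rewrite -[LHS]m_rl // r_i // s_i // -m_gi // m_assoc // m_gi // r_i //.
by rewrite m_sr.
Qed.

Lemma i_inj g h : A g -> A h -> i g = i h -> g = h.
Proof. by move=> Ag Ah e; rewrite -(i_i Ag) e i_i. Qed.

Lemma alg_k1 x b : A x -> A b -> s x = r b -> m (m x b) (i b) = x.
Proof.
move=> Ax Ab e.
have c1 : composable G x b by apply: cmp.
have c2 : composable G b (i b) by apply: cmp => //; [exact: a_i | rewrite r_i].
by rewrite (m_assoc c1 c2) m_gi // -e m_sr.
Qed.

Lemma alg5 a y b : A a -> A y -> A b -> s a = r y -> s y = s b ->
  m (i a) (m (m (m a y) (i b)) b) = y.
Proof.
move=> Aa Ay Ab e1 e2.
have cay : composable G a y by apply: cmp.
have Aay := a_m cay; have Aib := a_i Ab.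
have c2 : composable G (m a y) (i b) by apply: cmp => //; rewrite s_m // r_i.
have c3 : composable G (i b) b by apply: cmp => //; rewrite s_i.
rewrite (m_assoc c2 c3) m_ig // -e2 -(s_m cay) m_sr //.
have c4 : composable G (i a) a by apply: cmp => //; [exact: a_i| rewrite s_i].
by rewrite -(m_assoc c4 cay) m_ig // e1 m_rl.
Qed.
End Alg.

Section Rho.
Context {T : topologicalType} (G : groupoid_data T) (hg : is_groupoid G).
Context (F : set T) (hF : F `<=` units G) (th : T -> T)
  (hth : forall x, units G x ->
     [/\ garr G (th x), grg G (th x) = x & F (gsr G (th x))]).
Local Notation A := (garr G).
Local Notation r := (grg G).
Local Notation s := (gsr G).
Local Notation m := (gmul G).
Local Notation i := (ginv G).

Definition rho_of g := m (i (th (r g))) (m g (th (s g))).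

Lemma th_a x : units G x -> A (th x). Proof. by case/hth. Qed.
Lemma th_r x : units G x -> r (th x) = x. Proof. by case/hth. Qed.
Lemma th_F x : units G x -> F (s (th x)). Proof. by case/hth. Qed.

Lemma rho_facts g : A g ->
  [/\ composable G g (th (s g)),
      composable G (i (th (r g))) (m g (th (s g))),
      A (rho_of g), r (rho_of g) = s (th (r g)) &
      s (rho_of g) = s (th (s g))].
Proof.
move=> Ag.
have ur := r_units Ag; have us := s_units hg Ag.
have c1 : composable G g (th (s g)).
  by apply: cmp => //; [apply: th_a | rewrite th_r].
have Am := a_m hg c1.
have c2 : composable G (i (th (r g))) (m g (th (s g))).
  apply: cmp => //; first by apply: a_i => //; apply: th_a.
  by rewrite s_i ?th_r ?r_m //; apply: th_a.
split => //; first exact (a_m hg c2).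
  by rewrite /rho_of r_m // r_i //; apply: th_a.
by rewrite /rho_of s_m // s_m.
Qed.

Lemma alg4 a g b h d : A a -> A g -> A b -> A h -> A d ->
  r a = r g -> s g = r b -> r b = r h -> s h = r d ->
  m (i a) (m (m g h) d) = m (m (i a) (m g b)) (m (i b) (m h d)).
Proof.
move=> Aa Ag Ab Ah Ad ra gb bh hd.
have cgh : composable G g h by apply: cmp => //; rewrite gb.
have chd : composable G h d by apply: cmp.
have cgb : composable G g b by apply: cmp.
have Aia := a_i hg Aa; have Aib := a_i hg Ab.
have Ahd := a_m hg chd; have Agb := a_m hg cgb.
have cia : composable G (i a) (m g b) by apply: cmp => //; rewrite s_i // r_m.
have cib : composable G (i b) (m h d) by apply: cmp => //; rewrite s_i // r_m.
have Aibhd := a_m hg cib.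
rewrite (m_assoc hg cgh chd).
have cX : composable G (m g b) (m (i b) (m h d)).
  by apply: cmp => //; rewrite s_m // r_m // r_i.
have cY : composable G b (m (i b) (m h d)) by apply: cmp => //; rewrite r_m // r_i.
have cbib : composable G b (i b) by apply: cmp => //; rewrite r_i.
rewrite (m_assoc hg cia cX) (m_assoc hg cgb cY) -(m_assoc hg cbib cib).
rewrite m_gi // bh -(r_m hg chd) m_rl //.
Qed.

Lemma rho_mul g h : composable G g h ->
  composable G (rho_of g) (rho_of h) /\
  rho_of (m g h) = m (rho_of g) (rho_of h).
Proof.
move=> c; have [Ag [Ah sgrh]] := c.
have [cg1 cg2 Arg rrg srg] := rho_facts Ag.
have [ch1 ch2 Arh rrh srh] := rho_facts Ah.
have cr : composable G (rho_of g) (rho_of h) by apply: cmp => //; rewrite srg rrh sgrh.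
split => //.
rewrite /rho_of (r_m hg c) (s_m hg c) -sgrh.
have ur := r_units Ag; have us := s_units hg Ag; have ush := s_units hg Ah.
apply: alg4 => //; try (apply: th_a => //); try (rewrite th_r //).

Qed.

Lemma rho_sim g : A g ->
  [/\ composable G (th (r g)) (rho_of g), composable G g (th (s g)) &
      m (th (r g)) (rho_of g) = m g (th (s g))].
Proof.
move=> Ag.
have [c1 c2 Ar rr sr] := rho_facts Ag.
have ur := r_units Ag.
have Aa : A (th (r g)) by apply: th_a.
have ca : composable G (th (r g)) (i (th (r g))) by apply: cmp => //; [exact: a_i | rewrite r_i].
split => //.
rewrite /rho_of -(m_assoc hg ca c2) m_gi // th_r // -(r_m hg c1) m_rl //.
exact (a_m hg c1).
Qed.
End Rho.


Section Et.
Context {T : topologicalType} (G : groupoid_data T) (he : etale_groupoid G).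
Local Notation A := (garr G).
Local Notation r := (grg G).
Local Notation s := (gsr G).
Local Notation m := (gmul G).
Local Notation i := (ginv G).

Lemma hg : is_groupoid G. Proof. by case: he => -[]. Qed.
Lemma ctnr g : A g -> ctn A r g.
Proof. by case: he => -[_ H _ _ _] _ _ _; move/ctnP: H; apply. Qed.
Lemma ctns g : A g -> ctn A s g.
Proof. by case: he => -[_ _ H _ _] _ _ _; move/ctnP: H; apply. Qed.
Lemma ctni g : A g -> ctn A i g.
Proof. by case: he => -[_ _ _ H _] _ _ _; move/ctnP: H; apply. Qed.
Lemma mulc : {within [set p : T * T | composable G p.1 p.2],
         continuous (fun p => m p.1 p.2)}.
Proof. by case: he => -[]. Qed.

Lemma r_good a : A a -> exists Q, Q a /\ good A (units G) r Q.
Proof.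
case: he => _ _ _ [_ _ H] /H [Q [oQ Qa inj op]].
by exists Q; split => //; split.
Qed.

Lemma s_good a : A a -> exists Q, Q a /\ good A (units G) s Q.
Proof.
move=> Aa; have [Q [Qia [oQ inj op]]] := r_good (a_i hg Aa).
have [P [oP eP]] := ctn_pre (A := A) (f := i) ctni oQ.
exists P; split; first by apply/eP => //.
split => //.
  move=> x y; rewrite !inE => -[Px Ax] [Py Ay] e.
  apply: (i_inj hg) => //; apply: inj; rewrite ?inE.
  - by split; [apply/eP | apply: (a_i hg)].
  - by split; [apply/eP | apply: (a_i hg)].
  by rewrite !(r_i hg).
move=> W oW.
have [W' [oW' eW']] := ctn_pre (A := A) (f := i) ctni oW.
have [V oV eV] := op W' oW'.
exists V => //; rewrite -eV; apply/seteqP; split.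
  move=> y [x [[Wx Px] Ax] <-]; exists (i x); last by rewrite (r_i hg).
  split; [split|]; last exact: (a_i hg).
    by apply/eW'; [apply: (a_i hg) | rewrite (i_i hg)].
  by apply/eP.
move=> y [x [[W'x Qx] Ax] <-]; exists (i x); last by rewrite (s_i hg).
have Aix := a_i hg Ax.
split; [split|] => //.
  by have := (eW' x Ax).1 W'x.
by apply/eP => //; rewrite (i_i hg).
Qed.

Lemma bis a : A a -> exists Q, [/\ Q a, good A (units G) r Q & good A (units G) s Q].
Proof.
move=> Aa; have [Q1 [Q1a g1]] := r_good Aa; have [Q2 [Q2a g2]] := s_good Aa.
exists (Q1 `&` Q2); split => //.
  by apply: good_restrict => //; case: g2.
by rewrite setIC; apply: good_restrict => //; case: g1.
Qed.
End Et.

Section Sth.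
Context {T : topologicalType} (G : groupoid_data T) (he : etale_groupoid G).
Context (F : set T) (th : T -> T)
  (hth : forall x, units G x ->
     [/\ garr G (th x), grg G (th x) = x & F (gsr G (th x))])
  (hthc : forall x, units G x -> ctn (units G) th x).
Local Notation A := (garr G).
Local Notation r := (grg G).
Local Notation s := (gsr G).
Local Notation m := (gmul G).
Local Notation i := (ginv G).
Local Notation hg := (hg he).

Lemma sth_local x0 : units G x0 -> exists N M (psi : T -> T),
  [/\ open N /\ N x0, open M,
   (forall x, units G x -> N x -> M (s (th x)) /\ psi (s (th x)) = x),
   (forall y, units G y -> M y -> [/\ units G (psi y), N (psi y) & s (th (psi y)) = y]) &
   (forall y, units G y -> M y -> ctn (units G `&` M) psi y)].
Proof.
move=> ux0; have [Aa0 ra0 _] := hth ux0.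
have [Q [Qa0 gr gs]] := bis he Aa0.
have oQ : open Q by case: gr.
have [N [oN eN]] := ctn_pre (A := units G) (f := th) hthc oQ.
have [Nr [oNr eNr]] := ctn_pre (A := A) (f := r) (ctnr he) oN.
have gs' := good_restrict gs oNr.
have [sig [D [oD H1 H2 H3]]] := linv (th x0) gs' (fun g Ag => s_units hg Ag).
exists N, D, (fun y => r (sig y)); split => //.
- by split => //; apply/eN.
- move=> x ux Nx; have [Ath rth _] := hth ux.
  have Nr1 : Nr (th x) by apply/(eNr _ Ath); rewrite rth.
  have [Dx ex] := H1 (th x) (conj ((eN x ux).1 Nx) Nr1) Ath.
  by rewrite ex rth.
- move=> y uy Dy; have [[Qs Nrs] As es] := H2 y uy Dy.
  have Nrs' := (eNr _ As).1 Nrs.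
  have urs := r_units As.
  split => //.
  have [Ath rth _] := hth urs.
  suff -> : th (r (sig y)) = sig y by [].
  case: gr => _ inj _; apply: inj; rewrite ?inE //.
  by split => //; apply/eN.
- move=> y uy Dy.
  have [[Qs Nrs] As es] := H2 y uy Dy.
  apply: (ctn_comp (B := A)); last exact: ctnr.
    by move=> z [uz Dz]; case: (H2 z uz Dz).
  exact: H3.
Qed.
End Sth.


Section Cpt.
Context {T : topologicalType}.

Lemma cover_fin (K : set T) (I : Type) (Dm : set I) (f : I -> set T) :
  compact K -> (forall i, Dm i -> open (f i)) ->
  (forall x, K x -> exists i, Dm i /\ f i x) ->
  exists s : seq I, (forall i, List.In i s -> Dm i) /\
    forall x, K x -> exists i, List.In i s /\ f i x.
Proof.
move=> cK ofi cov.
apply: contrapT => nfin.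
pose D0 := [set s : seq I | forall i, List.In i s -> Dm i].
pose f0 := fun s : seq I => K `\` [set x | exists i, List.In i s /\ f i x].
pose FF := filter_from D0 f0.
have FFF : ProperFilter FF.
  apply: filter_from_proper.
    apply: filter_from_filter; first by exists [::].
    move=> s1 s2 D1 D2; exists (s1 ++ s2).
      by move=> i Hi; case: (List.in_app_or _ _ _ Hi); [apply: D1|apply: D2].
    move=> x [Kx nx]; split; split => // -[i [ii fi]]; apply: nx; exists i;
      split => //; apply: List.in_or_app; tauto.
  move=> s Ds; apply: contrapT => ne; apply: nfin; exists s; split => //.
  move=> x Kx; apply: contrapT => nx; apply: ne; exists x; split => //.
have FK : FF K by exists [::] => // x [].
have [x [Kx clx]] := cK FF FFF FK.
have [j [Dj fj]] := cov x Kx.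
have S1 : FF (f0 [:: j]) by exists [:: j] => // i [<-|[]].
have N1 : nbhs x (f j) by apply: open_nbhs_nbhs; split => //; apply: ofi.
have [z [[Kz nz] fz]] := clx _ _ S1 N1.
by apply: nz; exists j; split => //; left.
Qed.

Lemma open_fin (I : Type) (g : I -> set T) (s : seq I) :
  (forall i, List.In i s -> open (g i)) ->
  open [set z | forall i, List.In i s -> g i z].
Proof.
elim: s => [|a s IH] H.
  have -> : [set z | forall i, List.In i [::] -> g i z] = setT.
    by apply/seteqP; split => // z _ i [].
  exact: openT.
have -> : [set z | forall i, List.In i (a :: s) -> g i z] =
          g a `&` [set z | forall i, List.In i s -> g i z].
  apply/seteqP; split => z.
    by move=> Hz; split; [apply: Hz; left|move=> i Hi; apply: Hz; right].
  by case=> ga Hs i [<-|/Hs].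
apply: openI; first by apply: H; left.
by apply: IH => i Hi; apply: H; right.
Qed.

Lemma open_finU (I : Type) (g : I -> set T) (s : seq I) :
  (forall i, List.In i s -> open (g i)) ->
  open [set z | exists i, List.In i s /\ g i z].
Proof.
move=> H.
have -> : [set z | exists i, List.In i s /\ g i z] =
   \bigcup_(i in [set i | List.In i s]) g i.
  by apply/seteqP; split => z [i]; [case=> ? ?|]; exists i.
by apply: bigcup_open => i; apply: H.
Qed.

Lemma hs (A : set T) : hausdorff_space (subspace A) -> forall x y, A x -> A y -> x <> y ->
  exists U V, [/\ open U, open V, U x, V y & forall z, A z -> U z -> V z -> False].
Proof.
rewrite open_hausdorff => H x y Ax Ay nxy.
have /H [[P1 P2] /= [xP1 yP2] [oP1 oP2 /eqP P0]] : x != y by apply/eqP.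
move: xP1 yP2; rewrite !inE => xP1 yP2.
have /open_subspaceP [V1 oV1 e1] := oP1.
have /open_subspaceP [V2 oV2 e2] := oP2.
exists V1, V2; split => //.
- by have : (P1 `&` A) x by []; rewrite -e1 => -[].
- by have : (P2 `&` A) y by []; rewrite -e2 => -[].
move=> z Az V1z V2z.
have : (P1 `&` A) z by rewrite -e1.
have : (P2 `&` A) z by rewrite -e2.
case=> p2 _ [p1 _].
by have : (P1 `&` P2) z by []; rewrite P0.
Qed.
End Cpt.

Definition hsep {T : topologicalType} (A : set T) :=
  forall x y, A x -> A y -> x <> y ->
  exists U V, [/\ open U, open V, U x, V y & forall z, A z -> U z -> V z -> False].

Section Sep.
Context {T : topologicalType} (A : set T) (HA : hsep A).

Lemma sep_pt (K : set T) x : compact K -> K `<=` A -> A x -> ~ K x ->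
  exists U V, [/\ open U, open V, U x, K `<=` V &
     forall z, A z -> U z -> V z -> False].
Proof.
move=> cK KA Ax nKx.
have ex : forall k : T, exists UV : set T * set T, K k ->
   [/\ open UV.1, open UV.2, UV.1 k, UV.2 x &
       forall z, A z -> UV.1 z -> UV.2 z -> False].
  move=> k; case: (pselect (K k)) => Kk; last by exists (setT, setT).
  have nkx : k <> x by move=> e; apply: nKx; rewrite -e.
  have [U [V [oU oV Uk Vx H]]] := HA (KA _ Kk) Ax nkx.
  by exists (U, V).
have [e He] := choice ex.
have [s [sK cov]] : exists s : seq T, (forall i, List.In i s -> K i) /\
    forall z, K z -> exists i, List.In i s /\ (e i).1 z.
  apply: cover_fin => //.
    by move=> k Kk; case: (He k Kk).
  by move=> k Kk; exists k; split => //; case: (He k Kk).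
exists [set z | forall i, List.In i s -> (e i).2 z].
exists [set z | exists i, List.In i s /\ (e i).1 z].
split.
- by apply: open_fin => i /sK Ki; case: (He i Ki).
- by apply: open_finU => i /sK Ki; case: (He i Ki).
- by move=> i /sK Ki; case: (He i Ki).
- exact: cov.
move=> z Az H [i [si e1]].
have [_ _ _ _ Hd] := He i (sK i si).
exact: Hd z Az e1 (H i si).
Qed.

Lemma sep_cc (K1 K2 : set T) : compact K1 -> compact K2 -> K1 `<=` A -> K2 `<=` A ->
  (forall z, K1 z -> K2 z -> False) ->
  exists U1 U2, [/\ open U1, open U2, K1 `<=` U1, K2 `<=` U2 &
     forall z, A z -> U1 z -> U2 z -> False].
Proof.
move=> cK1 cK2 K1A K2A dis.
have ex : forall k : T, exists UV : set T * set T, K1 k ->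
   [/\ open UV.1, open UV.2, UV.1 k, K2 `<=` UV.2 &
       forall z, A z -> UV.1 z -> UV.2 z -> False].
  move=> k; case: (pselect (K1 k)) => Kk; last by exists (setT, setT).
  have [U [V [oU oV Uk Vx H]]] := sep_pt cK2 K2A (K1A _ Kk) (dis k Kk).
  by exists (U, V).
have [e He] := choice ex.
have [s [sK cov]] : exists s : seq T, (forall i, List.In i s -> K1 i) /\
    forall z, K1 z -> exists i, List.In i s /\ (e i).1 z.
  apply: cover_fin => //.
    by move=> k Kk; case: (He k Kk).
  by move=> k Kk; exists k; split => //; case: (He k Kk).
exists [set z | exists i, List.In i s /\ (e i).1 z].
exists [set z | forall i, List.In i s -> (e i).2 z].
split.
- by apply: open_finU => i /sK Ki; case: (He i Ki).
- by apply: open_fin => i /sK Ki; case: (He i Ki).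
- exact: cov.
- by move=> z K2z i /sK Ki; case: (He i Ki) => _ _ _ /(_ z K2z).
move=> z Az [i [si e1]] H.
have [_ _ _ _ Hd] := He i (sK i si).
exact: Hd z Az e1 (H i si).
Qed.
End Sep.

Definition rc {T : topologicalType} (K C : set T) :=
  C `<=` K /\ exists O1 O2, [/\ open O1, open O2 &
     forall z, K z -> (C z <-> O1 z) /\ (~ C z <-> O2 z)].

Section RC.
Context {T : topologicalType}.

Lemma rcK (K : set T) : rc K K.
Proof.
split => //; exists setT, set0; split; [exact: openT|exact: open0|].
by move=> z Kz; split; split.
Qed.

Lemma rcI (K C1 C2 : set T) : rc K C1 -> rc K C2 -> rc K (C1 `&` C2).
Proof.
case=> s1 [P1 [Q1 [oP1 oQ1 e1]]] [s2 [P2 [Q2 [oP2 oQ2 e2]]]].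
split; first by move=> z [/s1].
exists (P1 `&` P2), (Q1 `|` Q2); split; [exact: openI|exact: openU|].
move=> z Kz; have [a1 b1] := e1 z Kz; have [a2 b2] := e2 z Kz; split.
  by rewrite /setI /= a1 a2.
split.
  move=> n; case: (pselect (C1 z)) => c1; last by left; apply/b1.
  by right; apply/b2 => c2; apply: n.
by case=> q [c1 c2]; [apply: (proj2 b1 q) | apply: (proj2 b2 q)].
Qed.

Lemma rc_compact (K C : set T) : compact K -> rc K C -> compact C.
Proof.
move=> cK [sub [W1 [W2 [_ oW2 e]]]].
have -> : C = K `&` ~` W2.
  apply/seteqP; split => z.
    by move=> Cz; split; [apply: sub|have [_ [_ H]] := e z (sub z Cz); move=> w; apply: H w Cz].
  case=> Kz nO; have [_ [H1 H2]] := e z Kz.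
  by apply: contrapT => nC; apply: nO; apply: H1.
by apply: compact_closedI => //; apply: open_closedC.
Qed.

Lemma rc_fin (K : set T) (I : Type) (c : I -> set T) (s : seq I) :
  (forall i, List.In i s -> rc K (c i)) ->
  rc K [set z | K z /\ forall i, List.In i s -> c i z].
Proof.
elim: s => [|a s IH] H.
  have -> : [set z | K z /\ forall i, List.In i [::] -> c i z] = K.
    by apply/seteqP; split => z; [case|split].
  exact: rcK.
have -> : [set z | K z /\ forall i, List.In i (a :: s) -> c i z] =
    c a `&` [set z | K z /\ forall i, List.In i s -> c i z].
  apply/seteqP; split => z.
    case=> Kz Hz; split; first by apply: Hz; left.
    by split => // i Hi; apply: Hz; right.
  by case=> ca [Kz Hs]; split => // i [<-|/Hs].
apply: rcI; first by apply: H; left.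
by apply: IH => i Hi; apply: H; right.
Qed.
End RC.

Section SB.
Context {T : topologicalType} (A : set T) (HA : hsep A).
Context (K : set T) (cK : compact K) (KA : K `<=` A) (x : T) (Kx : K x)
  (CH : forall Q, Q `<=` K -> Q x -> connected Q -> Q `<=` [set x]).

Let S := [set C : set T | rc K C /\ C x].
Let Q := [set z | K z /\ forall C, S C -> C z].

Lemma Q_compact : compact Q.
Proof.
have -> : Q = K `&` \bigcap_(C in S) closure C.
  apply/seteqP; split => z.
    by case=> Kz H; split => // C SC; apply: subset_closure; apply: H.
  case=> Kz H; split => // C [[sub [W1 [W2 [oW1 oW2 e]]]] Cx].
  have cl : closed (~` W2) by apply: open_closedC.
  have CW : C `<=` ~` W2.
    by move=> y Cy; have [_ [_ H2]] := e y (sub y Cy); move=> w; apply: H2 w Cy.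
  have : (~` W2) z.
    have -> : ~` W2 = closure (~` W2) by apply/closure_id.
    apply: (closureS CW); apply: H; split => //.
    by split => //; exists W1, W2.
  have [_ [H1 _]] := e z Kz.
  by move=> nW; apply: contrapT => nC; apply: nW; apply: H1.
apply: compact_closedI => //; apply: closed_bigI => C _; exact: closed_closure.
Qed.

Lemma avoid (L : set T) : compact L -> L `<=` K -> (forall z, L z -> ~ Q z) ->
  exists C, S C /\ forall z, C z -> ~ L z.
Proof.
move=> cL LK LQ.
pose Dm := [set p : set T * set T * set T | S p.1.1 /\ open p.2 /\
   forall z, K z -> (p.1.1 z <-> p.1.2 z) /\ (~ p.1.1 z <-> p.2 z)].
have [s [sD cov]] : exists s : seq (set T * set T * set T),
   (forall i, List.In i s -> Dm i) /\ forall z, L z -> exists i, List.In i s /\ i.2 z.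
  apply: cover_fin => //; first by move=> p [_ []].
  move=> z Lz; have Kz := LK z Lz.
  have : ~ forall C, S C -> C z by move=> H; apply: (LQ z Lz).
  move=> /existsNP [C /not_implyP [[[sub [W1 [W2 [oW1 oW2 e]]]] Cx] nC]].
  exists (C, W1, W2); split => //=.
    by split => //; split => //; split => //; exists W1, W2.
  by have [_ [H _]] := e z Kz; apply: H.
exists [set z | K z /\ forall i, List.In i s -> i.1.1 z]; split.
  split.
    by apply: rc_fin => i si; have [[r _] _] := sD i si.
  by split => // i si; have [[_ ?] _] := sD i si.
move=> z [Kz H] Lz.
have [i [si i2]] := cov z Lz.
have [_ [_ e]] := sD i si.
have [_ [_ H2]] := e z Kz; exact: (H2 i2 (H i si)).
Qed.

Lemma Qx : Q x. Proof. by split => // C []. Qed.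

Lemma Q_cl (P : set T) : (exists2 Op, open Op & P = Q `&` Op) ->
  (exists2 Cl, closed Cl & P = Q `&` Cl) -> P x -> P = Q.
Proof.
move=> [Op oOp eP] [Cl cCl eC] Px.
have QA : Q `<=` A by move=> z [/KA].
have cP : compact P by rewrite eC; apply: compact_closedI => //; exact: Q_compact.
have cR : compact (Q `&` ~` Op).
  by apply: compact_closedI; [exact: Q_compact|apply: open_closedC].
have [U1 [U2 [oU1 oU2 PU RU dis]]] : exists U1 U2, [/\ open U1, open U2,
    P `<=` U1, Q `&` ~` Op `<=` U2 & forall z, A z -> U1 z -> U2 z -> False].
  apply: sep_cc => //.
  - by move=> z; rewrite eP => -[/QA].
  - by move=> z [/QA].
  by move=> z; rewrite eP => -[_ ?] [_].
have hL : forall z, (K `&` ~` (U1 `|` U2)) z -> ~ Q z.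
  move=> z [Kz nU] Qz; apply: nU.
  case: (pselect (Op z)) => o; [left; apply: PU; rewrite eP|right; apply: RU] => //.
have [C [[[sub [W1 [W2 [oW1 oW2 e]]]] Cx] CL]] :=
  @avoid (K `&` ~` (U1 `|` U2)) (compact_closedI cK (open_closedC (openU oU1 oU2)))
    (fun z h => proj1 h) hL.
have SC' : S (C `&` U1).
  split; last by split => //; apply: PU.
  split; first by move=> z [/sub].
  exists (W1 `&` U1), (W2 `|` U2); split; [exact: openI|exact: openU|].
  move=> z Kz; have [a b] := e z Kz; split.
    by split => -[c u]; split => //; apply/a.
  split.
    move=> n; case: (pselect (C z)) => c; last by left; apply/b.
    right; apply: contrapT => nU2; apply: (CL z c); split => // -[u1|u2] //.
    by apply: n.
  case=> [w2 [c _]|u2 [_ u1]]; first exact: (proj2 b w2 c).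
  exact (dis z (KA Kz) u1 u2).
apply/seteqP; split; first by rewrite eP => z [].
move=> z Qz; have [_ u1] : (C `&` U1) z by apply: Qz.2.
case: (pselect (Op z)) => o; first by rewrite eP.
by exfalso; apply: (dis z (QA z Qz) u1); apply: RU.
Qed.

Lemma Q_conn : connected Q.
Proof.
move=> P [z Pz] [Op oOp eP] [Cl cCl eC].
case: (pselect (P x)) => Px; first by apply: Q_cl => //; [exists Op|exists Cl].
exfalso.
have PO y : Q y -> (P y <-> Op y).
  by move=> Qy; rewrite eP; split => [[]|] .
have PC y : Q y -> (P y <-> Cl y).
  by move=> Qy; rewrite eC; split => [[]|] .
have eP' : Q `&` ~` Op = Q `&` ~` Cl.
  apply/seteqP; split => y [Qy ny]; split => // H; apply: ny.
    by apply/(PO y Qy)/(PC y Qy).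
  by apply/(PC y Qy)/(PO y Qy).
have H' : Q `&` ~` Op = Q.
  apply: Q_cl.
  - by exists (~` Cl) => //; apply: closed_openC.
  - by exists (~` Op) => //; apply: open_closedC.
  split; first exact: Qx.
  by move=> o; apply: Px; apply/(PO x Qx).
have Qz : Q z by move: Pz; rewrite eP => -[].
have : (Q `&` ~` Op) z by rewrite H'.
by case=> _; apply; apply/(PO z Qz).
Qed.

Lemma Q_sub : Q `<=` [set x].
Proof. by apply: CH => //; [move=> z []|exact: Qx|exact: Q_conn]. Qed.

Lemma zd_local (O : set T) : open O -> O x ->
  exists C, [/\ rc K C, C x & C `<=` O].
Proof.
move=> oO Ox.
have [C [[rC Cx] CL]] := @avoid (K `&` ~` O) (compact_closedI cK (open_closedC oO))
  (fun z h => proj1 h) (fun z '(conj Kz nO) Qz => nO (ltac:(by have -> : z = x by apply: Q_sub))).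
exists C; split => // z Cz; apply: contrapT => nO.
by apply: (CL z Cz); split => //; case: rC => /(_ z Cz).
Qed.
End SB.


Section Core.
Context {T : topologicalType} (G : groupoid_data T) (he : etale_groupoid G).
Context (F : set T) (hFu : F `<=` units G) (hFo : rel_open (units G) F)
  (th : T -> T) (hthc0 : {within units G, continuous th})
  (hth : forall x, units G x ->
     [/\ garr G (th x), grg G (th x) = x & F (gsr G (th x))]).
Local Notation A := (garr G).
Local Notation r := (grg G).
Local Notation s := (gsr G).
Local Notation m := (gmul G).
Local Notation i := (ginv G).
Local Notation rho := (rho_of G th).
Local Notation B := (garr (reduction G F)).

Let hg := hg he.
Let hthc : forall x, units G x -> ctn (units G) th x := (ctnP _ _).1 hthc0.

Lemma ctn_thr (D : set T) g : D `<=` A -> A g -> ctn D (fun g => th (r g)) g.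
Proof.
move=> DA Ag; apply: (ctn_comp (B := units G)).
- by move=> y /DA; apply: r_units.
- exact: ctn_sub DA (ctnr he Ag).
exact: hthc (r_units Ag).
Qed.

Lemma ctn_ths (D : set T) g : D `<=` A -> A g -> ctn D (fun g => th (s g)) g.
Proof.
move=> DA Ag; apply: (ctn_comp (B := units G)).
- by move=> y /DA; apply: (s_units hg).
- exact: ctn_sub DA (ctns he Ag).
exact: hthc (s_units hg Ag).
Qed.

Lemma ctn_rho g : A g -> ctn A rho g.
Proof.
move=> Ag.
have c1 : ctn A (fun g => i (th (r g))) g.
  apply: (ctn_comp (B := A) (f := fun g => th (r g))).
  - by move=> y Ay; apply: (th_a hth); apply: r_units.
  - exact: ctn_thr.
  by apply: (ctni he); apply: (th_a hth); apply: r_units.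
have c2 : ctn A (fun g => m g (th (s g))) g.
  apply: (ctn_bin (mulc he)) => //; last exact: ctn_ths.
  - by move=> y Ay /=; case: (rho_facts hg hth Ay).
  exact: ctn_id.
apply: (ctn_bin (mulc he) (f := fun g => i (th (r g))) (g := fun g => m g (th (s g)))) => //.
by move=> y Ay /=; case: (rho_facts hg hth Ay).
Qed.

Lemma rho_B g : A g -> B (rho g).
Proof.
move=> Ag; have [_ _ Ar rr sr] := rho_facts hg hth Ag.
split; [split|] => //=.
  by rewrite rr; apply: (th_F hth); apply: r_units.
by rewrite sr; apply: (th_F hth); apply: (s_units hg).
Qed.

Lemma B_open : exists P, open P /\ forall g, A g -> (P g <-> B g).
Proof.
case: hFo => V oV eF.
have [Pr [oPr ePr]] := ctn_pre (A := A) (f := r) (ctnr he) oV.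
have [Ps [oPs ePs]] := ctn_pre (A := A) (f := s) (ctns he) oV.
exists (Pr `&` Ps); split; first exact: openI.
move=> g Ag; have ur := r_units Ag; have us := s_units hg Ag.
rewrite /= eF; split.
  by case=> /(ePr g Ag) ? /(ePs g Ag) ?.
by case=> -[_ [? _]] [? _]; split; [apply/(ePr g Ag)|apply/(ePs g Ag)].
Qed.


Lemma BA : B `<=` A. Proof. by move=> g [[]]. Qed.

Lemma B_fact g : B g -> [/\ A g, F (r g) & F (s g)].
Proof. by case=> -[]. Qed.

Lemma sigma_etale : etale_homomorphism (reduction G F) G id.
Proof.
split; split.
- by move=> _ [g Bg <-]; apply: BA.
- by apply/ctnP => x _; exact: ctn_id.
- move=> g h [Bg [Bh e]]; split => //; split; first exact: BA.
  by split; first exact: BA.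
- by move=> _ [g Bg <-]; apply: BA.
- by apply/ctnP => x _; exact: ctn_id.
move=> x Bx; have [P [oP eP]] := B_open.
exists setT; split => //; first exact: openT.
move=> W oW; exists (W `&` P); first exact: openI.
apply/seteqP; split.
  move=> _ [g [[Wg _] Bg] <-]; split; last exact: BA.
  by split => //; apply/(eP g (BA Bg)).
move=> g [[Wg Pg] Ag]; exists g => //; split => //.
by apply/(eP g Ag).
Qed.

Lemma sim1 : Defs.similar G G (id \o rho) id.
Proof.
exists th; split.
- by apply/ctnP.
- by move=> _ [x ux <-]; apply: (th_a hth).
move=> g Ag; have [c1 c2 e] := rho_sim hg hth Ag; split => //.
Qed.

Lemma sim2 : Defs.similar (reduction G F) (reduction G F) (rho \o id) id.
Proof.
exists th; split.
- apply/ctnP => x [g Bg <-].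
  apply: (ctn_sub (A := units G)); last exact: hthc (r_units (BA Bg)).
  by move=> _ [h Bh <-]; apply: r_units (BA Bh).
- move=> _ [x [g Bg <-] <-].
  have [Ag Fr Fs] := B_fact Bg; have ur := r_units Ag.
  have [Ath rth Fth] := hth ur.
  by split; [split|] => //=; rewrite rth.
move=> g Bg; have [Ag Fr Fs] := B_fact Bg.
have [c1 c2 e] := rho_sim hg hth Ag.
have ur := r_units Ag; have us := s_units hg Ag.
have [Ath rth Fth] := hth ur; have [Ath' rth' Fth'] := hth us.
have Brho := rho_B Ag.
split => //.
- split; first by split; [split|] => //=; rewrite rth.
  by split => //; case: c1 => _ [].
- split => //; split; first by split; [split|] => //=; rewrite rth'.
  by case: c2 => _ [].
Qed.

Lemma rho_etale : etale_homomorphism G (reduction G F) rho.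
Proof.
split; split.
- by move=> _ [g Ag <-]; exact: rho_B.
- by apply/ctnP => g Ag; exact: ctn_rho.
- move=> g h c; have [cr e] := rho_mul hg hth c; split => //.
  have [Ag [Ah _]] := c.
  split; first exact: rho_B.
  split; first exact: rho_B.
  by case: cr => _ [].
- by move=> _ [g Ag <-]; exact: rho_B.
- by apply/ctnP => g Ag; exact: ctn_rho.
move=> g0 Ag0.
have ur0 := r_units Ag0; have us0 := s_units hg Ag0.
have [N1 [M1 [p1 [[oN1 N1x] oM1 H1a H1b H1c]]]] := sth_local he hth hthc ur0.
have [N2 [M2 [p2 [[oN2 N2x] oM2 H2a H2b H2c]]]] := sth_local he hth hthc us0.
have [Q1 [oQ1 eQ1]] := ctn_pre (A := A) (f := r) (ctnr he) oN1.
have [Q2 [oQ2 eQ2]] := ctn_pre (A := A) (f := s) (ctns he) oN2.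
have [V1 [oV1 eV1]] := ctn_pre (A := A) (f := r) (ctnr he) oM1.
have [V2 [oV2 eV2]] := ctn_pre (A := A) (f := s) (ctns he) oM2.
pose k y := m (m (th (p1 (r y))) y) (i (th (p2 (s y)))).
have KP : forall y, B y -> (V1 `&` V2) y ->
  [/\ [/\ units G (p1 (r y)), N1 (p1 (r y)) & s (th (p1 (r y))) = r y],
      [/\ units G (p2 (s y)), N2 (p2 (s y)) & s (th (p2 (s y))) = s y],
      composable G (th (p1 (r y))) y,
      composable G (m (th (p1 (r y))) y) (i (th (p2 (s y)))) &
      r (k y) = p1 (r y) /\ s (k y) = p2 (s y)].
  move=> y By [V1y V2y]; have Ay := BA By.
  have [u1 n1 e1] := H1b (r y) (r_units Ay) ((eV1 y Ay).1 V1y).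
  have [u2 n2 e2] := H2b (s y) (s_units hg Ay) ((eV2 y Ay).1 V2y).
  have [Aa ra _] := hth u1; have [Ab rb _] := hth u2.
  have cay : composable G (th (p1 (r y))) y by apply: cmp.
  have Aay := a_m hg cay.
  have c2 : composable G (m (th (p1 (r y))) y) (i (th (p2 (s y)))).
    by apply: cmp => //; [apply: (a_i hg) | rewrite (s_m hg cay) (r_i hg)].
  split => //; rewrite /k (r_m hg c2) (s_m hg c2) (r_m hg cay) ra.
  by rewrite (s_i hg) // rb.
apply: (lh_inv (A := A) (B := B) (f := rho) (x0 := g0)
  (Q := Q1 `&` Q2) (V := V1 `&` V2) (h := k) (openI oQ1 oQ2) _ (openI oV1 oV2) rho_B).
- by split; [apply/(eQ1 _ Ag0) | apply/(eQ2 _ Ag0)].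
- move=> x Ax [Q1x Q2x].
  have N1r := (eQ1 x Ax).1 Q1x; have N2s := (eQ2 x Ax).1 Q2x.
  have [_ _ Ar rr sr] := rho_facts hg hth Ax.
  have [M1a p1a] := H1a (r x) (r_units Ax) N1r.
  have [M2a p2a] := H2a (s x) (s_units hg Ax) N2s.
  split.
    by split; [apply/(eV1 _ Ar); rewrite rr | apply/(eV2 _ Ar); rewrite sr].
  rewrite /k rr sr p1a p2a.
  have [_ _ e] := rho_sim hg hth Ax.
  rewrite e; apply: (alg_k1 hg) => //; first by apply: (th_a hth); apply: (s_units hg).
  by rewrite (th_r hth) //; apply: (s_units hg).
- move=> y By Vy; have Ay := BA By.
  have [[u1 n1 e1] [u2 n2 e2] cay c2 [rk sk]] := KP y By Vy.
  split; first exact: (a_m hg c2).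
    by split; [apply/(eQ1 _ (a_m hg c2)); rewrite rk | apply/(eQ2 _ (a_m hg c2)); rewrite sk].
  rewrite /rho_of rk sk /k; apply: (alg5 hg) => //.
  + by apply: (th_a hth).
  + by apply: (th_a hth).
- move=> y By Vy; have Ay := BA By.
  have [[u1 n1 e1] [u2 n2 e2] cay c2 [rk sk]] := KP y By Vy.
  have DA : B `&` (V1 `&` V2) `<=` A by move=> z [/BA].
  have cf1 : ctn (B `&` (V1 `&` V2)) (fun z => th (p1 (r z))) y.
    apply: (ctn_comp (B := units G) (f := fun z => p1 (r z))).
    - by move=> z [Bz Vz]; case: (KP z Bz Vz) => -[].
    - apply: (ctn_comp (B := units G `&` M1)).
      + move=> z [Bz [V1z _]]; split; first exact: r_units (BA Bz).
        by apply/(eV1 z (BA Bz)).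
      + exact: ctn_sub DA (ctnr he Ay).
      apply: H1c; first exact: r_units.
      by apply/(eV1 y Ay); case: Vy.
    exact: hthc.
  have cf2 : ctn (B `&` (V1 `&` V2)) (fun z => i (th (p2 (s z)))) y.
    apply: (ctn_comp (B := A) (f := fun z => th (p2 (s z)))).
    - by move=> z [Bz Vz]; case: (KP z Bz Vz) => _ [uz _ _] _ _ _; apply: (th_a hth).
    - apply: (ctn_comp (B := units G) (f := fun z => p2 (s z))).
      + by move=> z [Bz Vz]; case: (KP z Bz Vz) => _ [].
      + apply: (ctn_comp (B := units G `&` M2)).
        * move=> z [Bz [_ V2z]]; split; first exact: (s_units hg (BA Bz)).
          by apply/(eV2 z (BA Bz)).
        * exact: ctn_sub DA (ctns he Ay).
        apply: H2c; first exact: (s_units hg).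
        by apply/(eV2 y Ay); case: Vy.
      exact: hthc.
    by apply: (ctni he); apply: (th_a hth).
  have cin : ctn (B `&` (V1 `&` V2)) (fun z => m (th (p1 (r z))) z) y.
    apply: (ctn_bin (mulc he) (f := fun z => th (p1 (r z))) (g := id)) => //.
      by move=> z [Bz Vz]; case: (KP z Bz Vz).
    exact: ctn_id.
  apply: (ctn_bin (mulc he) (f := fun z => m (th (p1 (r z))) z)
     (g := fun z => i (th (p2 (s z))))) => //.
  by move=> z [Bz Vz]; case: (KP z Bz Vz).
Qed.

Theorem core : homologically_similar G (reduction G F).
Proof.
exists rho, id; split.
- exact: rho_etale.
- exact: sigma_etale.
- exact: sim1.
- exact: sim2.
Qed.
End Core.


Section P2a.
Context {T : topologicalType} (G : groupoid_data T) (he : etale_groupoid G).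
Local Notation A := (garr G).
Local Notation r := (grg G).
Local Notation s := (gsr G).
Local Notation U0 := (units G).

Lemma HA : hsep A.
Proof. by case: he => _ H _ _; move=> x y Ax Ay nxy; apply: hs. Qed.

Lemma lc_units x : U0 x -> exists V Kc, [/\ open V, V x, compact Kc,
  (forall z, U0 z -> V z -> Kc z) & Kc `<=` U0].
Proof.
move=> ux; have Ax := units_a (hg he) ux.
have [V [Kc [oV Vx cK VK KA]]] : exists V Kc, [/\ open V, V x, compact Kc,
     V `&` A `<=` Kc & Kc `<=` A].
  by case: he => _ _ H _; apply: H.
pose Sw := [set W : set T | open W /\ forall w, A w -> W w -> ~ U0 w].
pose Z := ~` \bigcup_(W in Sw) W.
have cZ : closed Z by apply: open_closedC; apply: bigcup_open => W [].
have eZ z : A z -> (Z z <-> U0 z).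
  move=> Az; split.
    move=> Zz; apply: contrapT => nu.
    have nr : r z <> z by move=> e; apply: nu; exists z.
    have [U1 [U2 [oU1 oU2 U1z U2r dis]]] := HA (a_r (hg he) Az) Az nr.
    have [W [oW Wz WV]] := (ctnr he Az) U1 oU1 U1z.
    apply: Zz; exists (W `&` U2); last by split.
    split; first exact: openI.
    move=> w Aw [Ww U2w] uw.
    apply: (dis w Aw) => //.
    by have := WV w Aw Ww; rewrite (units_r (hg he)).
  by move=> uz [W [_ H] Wz]; apply: (H z Az Wz uz).
exists V, (Kc `&` Z); split => //.
- exact: compact_closedI.
- move=> z uz Vz; have Az := units_a (hg he) uz.
  by split; [apply: VK|apply/eZ].
move=> z [Kz Zz]; have Az := KA _ Kz.
by apply/eZ.
Qed.
End P2a.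

Section P2b.
Context {T : topologicalType} (G : groupoid_data T) (he : etale_groupoid G).
Context (F : set T) (hFu : F `<=` units G) (hFo : rel_open (units G) F)
  (hfull : full G F) (htd : totally_disconnected (units G)).
Local Notation A := (garr G).
Local Notation r := (grg G).
Local Notation s := (gsr G).
Local Notation U0 := (units G).
Let hg := hg he.

Lemma zd x (O : set T) : U0 x -> open O -> O x ->
  exists C P, [/\ C x, C `<=` O, compact C, C `<=` U0 &
     open P /\ forall z, U0 z -> (C z <-> P z)].
Proof.
move=> ux oO Ox.
have [V [Kc [oV Vx cK VK KU]]] := lc_units he ux.
have KA : Kc `<=` A by move=> z /KU; apply: (units_a hg).
have Kx : Kc x by apply: VK.
have CH : forall Q, Q `<=` Kc -> Q x -> connected Q -> Q `<=` [set x].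
  move=> Q QK Qx cQ z Qz; rewrite -(htd ux); exists Q => //.
  by split => // w /QK /KU.
have [C [[CK [W1 [W2 [oW1 oW2 e]]]] Cx CO]] :=
  zd_local (HA he) cK KA Kx CH (openI oO oV) (conj Ox Vx).
exists C, (W1 `&` V); split => //.
- by move=> z /CO [].
- by apply: rc_compact cK _; split => //; exists W1, W2.
- by move=> z /CK /KU.
split; first exact: openI.
move=> z uz; split.
  move=> Cz; have [/= a _] := e z (CK _ Cz).
  by split; [apply/a|case: (CO _ Cz)].
case=> w1 vz; have Kz := VK z uz vz.
by have [/= a _] := e z Kz; apply/a.
Qed.

Lemma sec x : U0 x -> exists (tau : T -> T) (D : set T), [/\ open D, D x,
  (forall y, U0 y -> D y -> [/\ A (tau y), r (tau y) = y & F (s (tau y))]) &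
  (forall y, U0 y -> D y -> ctn (U0 `&` D) tau y)].
Proof.
move=> ux; have [g [Ag rg Fs]] := hfull ux.
have [Q [Qg gQ]] := r_good he Ag.
case: hFo => V oV eF.
have [Ps [oPs ePs]] := ctn_pre (A := A) (f := s) (ctns he) oV.
have gQ' := good_restrict gQ oPs.
have [tau [D [oD H1 H2 H3]]] := linv g gQ' (fun h Ah => r_units Ah).
have Psg : Ps g by apply/(ePs g Ag); move: Fs; rewrite eF => -[].
have [Dx _] := H1 g (conj Qg Psg) Ag.
exists tau, D; split => //; first by rewrite -rg.
move=> y uy Dy; have [[Qt Pst] At rt] := H2 y uy Dy.
split => //; rewrite eF; split; first by apply/(ePs _ At).
exact: (s_units hg At).
Qed.
End P2b.

Section P2c.
Context {T : topologicalType} (G : groupoid_data T) (he : etale_groupoid G).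
Context (F : set T) (hFu : F `<=` units G) (hFo : rel_open (units G) F)
  (hfull : full G F) (htd : totally_disconnected (units G))
  (hsc : sigma_compact (units G)).
Local Notation A := (garr G).
Local Notation r := (grg G).
Local Notation s := (gsr G).
Local Notation U0 := (units G).
Let hg := hg he.

Definition pack (x : T) (p : (T -> T) * set T * set T * set T) :=
  [/\ open p.1.1.2,
      (forall y, U0 y -> p.1.1.2 y -> [/\ A (p.1.1.1 y), r (p.1.1.1 y) = y & F (s (p.1.1.1 y))]) /\
      (forall y, U0 y -> p.1.1.2 y -> ctn (U0 `&` p.1.1.2) p.1.1.1 y),
      [/\ p.1.2 x, p.1.2 `<=` p.1.1.2, compact p.1.2 & p.1.2 `<=` U0],
      open p.2 &
      forall z, U0 z -> (p.1.2 z <-> p.2 z)].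

Lemma pack_ex x : exists p, U0 x -> pack x p.
Proof.
case: (pselect (U0 x)) => ux; last by exists (id, set0, set0, set0).
have [tau [D [oD Dx H1 H2]]] := sec he hFo hfull ux.
have [C [P [Cx CD cC CU [oP eP]]]] := zd he htd ux oD Dx.
by exists (tau, D, C, P) => _; split.
Qed.

Definition pf x := proj1_sig (cid (pack_ex x)).
Lemma pfP x : U0 x -> pack x (pf x).
Proof. by rewrite /pf; case: cid => p /= H. Qed.

Definition tau y := (pf y).1.1.1.
Definition Dd y := (pf y).1.1.2.
Definition Cc y := (pf y).1.2.
Definition Pp y := (pf y).2.

Lemma PK y : U0 y -> [/\ open (Dd y),
      (forall z, U0 z -> Dd y z -> [/\ A (tau y z), r (tau y z) = z & F (s (tau y z))]) /\
      (forall z, U0 z -> Dd y z -> ctn (U0 `&` Dd y) (tau y) z),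
      [/\ Cc y y, Cc y `<=` Dd y, compact (Cc y) & Cc y `<=` U0],
      open (Pp y) &
      forall z, U0 z -> (Cc y z <-> Pp y z)].
Proof. exact: pfP. Qed.

Definition Kn := proj1_sig (cid hsc).
Lemma KnP : (forall n, compact (Kn n) /\ Kn n `<=` U0) /\ U0 = \bigcup_n Kn n.
Proof. by rewrite /Kn; case: cid. Qed.

Lemma sq_ex n : exists sq : seq T, (forall i, List.In i sq -> U0 i) /\
   forall z, Kn n z -> exists i, List.In i sq /\ Pp i z.
Proof.
have [[cK KU] _] := (KnP.1 n, KnP.2).
apply: cover_fin => //.
  by move=> i ui; case: (PK ui).
move=> z Kz; have uz := KU _ Kz; exists z; split => //.
by have [_ _ [Cz _ _ _] _ e] := PK uz; apply/e.
Qed.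

Definition sq n := proj1_sig (cid (sq_ex n)).
Lemma sqP n : (forall i, List.In i (sq n) -> U0 i) /\
   forall z, Kn n z -> exists i, List.In i (sq n) /\ Pp i z.
Proof. by rewrite /sq; case: cid. Qed.

Definition item (k : nat) : option T :=
  match @unpickle (nat * nat)%type k with
  | Some (n, j) => List.nth_error (sq n) j
  | None => None end.

Lemma item_u k y : item k = Some y -> U0 y.
Proof.
rewrite /item; case: unpickle => [[n j]|] // e.
by apply: (sqP n).1; apply: List.nth_error_In e.
Qed.

Lemma item_cov x : U0 x -> exists k y, item k = Some y /\ Cc y x.
Proof.
move=> ux; have := ux; rewrite KnP.2 => -[n _ Knx].
have [i [ii Pix]] := (sqP n).2 x Knx.
have [j ej] := List.In_nth_error _ _ ii.
exists (pickle (n, j)), i; split.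
  by rewrite /item pickleK.
have ui := (sqP n).1 i ii.
by have [_ _ _ _ e] := PK ui; apply/e.
Qed.

Definition mk x k y := [/\ item k = Some y, Cc y x &
  forall k' y', (k' < k)%N -> item k' = Some y' -> ~ Cc y' x].

Lemma mk_ex x : U0 x -> exists k y, mk x k y.
Proof.
move=> ux.
have exP : exists k, `[< exists y, item k = Some y /\ Cc y x >].
  by have [k [y H]] := item_cov ux; exists k; apply/asboolP; exists y.
case: (ex_minnP exP) => k /asboolP [y [iy Cy]] kmin.
exists k, y; split => // k' y' lt iy' Cy'.
have : (k <= k')%N by apply: kmin; apply/asboolP; exists y'.
by rewrite leqNgt lt.
Qed.

Lemma mk_uniq x k y k2 y2 : mk x k y -> mk x k2 y2 -> y = y2.
Proof.
case=> i1 c1 m1 [i2 c2 m2].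
have ek : k = k2.
  apply/eqP; rewrite eqn_leq; apply/andP; split; rewrite leqNgt; apply/negP.
    by move=> lt; apply: (m1 _ _ lt i2 c2).
  by move=> lt; apply: (m2 _ _ lt i1 c1).
by move: i1 i2; rewrite ek => -> [].
Qed.

Definition th x : T :=
  match pselect (exists p : nat * T, mk x p.1 p.2) with
  | left e => tau (proj1_sig (cid e)).2 x
  | right _ => x end.

Lemma th_eq x k y : mk x k y -> th x = tau y x.
Proof.
move=> m; rewrite /th; case: pselect => [e|ne]; last first.
  by exfalso; apply: ne; exists (k, y).
case: cid => -[k2 y2] /= m2.
by rewrite (mk_uniq m2 m).
Qed.

Lemma avoid_prefix k x : A x ->
  (forall k' y', (k' < k)%N -> item k' = Some y' -> ~ Cc y' x) ->
  exists U, [/\ open U, U x &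
    forall z, A z -> U z -> forall k' y', (k' < k)%N -> item k' = Some y' -> ~ Cc y' z].
Proof.
move=> Ax; elim: k => [|k IH] H.
  by exists setT; split => //; exact: openT.
have [U [oU Ux HU]] : exists U, [/\ open U, U x &
    forall z, A z -> U z -> forall k' y', (k' < k)%N -> item k' = Some y' -> ~ Cc y' z].
  by apply: IH => k' y' lt; apply: H; apply: ltn_trans lt _.
case ek: (item k) => [y|]; last first.
  exists U; split => // z Az Uz k' y' lt iy.
  rewrite ltnS leq_eqVlt in lt; case/orP: lt => [/eqP ek'|lt].
    by move: iy; rewrite ek' ek.
  exact: (HU z Az Uz k' y' lt iy).
have uy := item_u ek.
have [_ _ [_ _ cC CU] _ _] := PK uy.
have nC : ~ Cc y x by apply: H ek.
have CA : Cc y `<=` A by move=> z /CU; apply: (units_a hg).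
have [U' [V [oU' oV U'x CV dis]]] := sep_pt (HA he) cC CA Ax nC.
exists (U `&` U'); split => //; first exact: openI.
move=> z Az [Uz U'z] k' y' lt iy.
rewrite ltnS leq_eqVlt in lt; case/orP: lt => [/eqP ek'|lt].
  move: iy; rewrite ek' ek => -[<-] Cz.
  exact: (dis z Az U'z (CV _ Cz)).
exact: (HU z Az Uz k' y' lt iy).
Qed.

Lemma th_good x : U0 x -> [/\ A (th x), r (th x) = x & F (s (th x))].
Proof.
move=> ux; have [k [y m]] := mk_ex ux.
rewrite (th_eq m); have [iy Cx _] := m.
have uy := item_u iy.
have [_ [H1 _] [_ CD _ _] _ _] := PK uy.
by apply: H1 => //; apply: CD.
Qed.

Lemma th_ctn x : U0 x -> ctn U0 th x.
Proof.
move=> ux; have [k [y m]] := mk_ex ux.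
have [iy Cx mn] := m.
have uy := item_u iy.
have [oD [H1 H2] [_ CD _ _] oP eP] := PK uy.
have [U [oU Ux HU]] := avoid_prefix (units_a hg ux) mn.
apply: (ctn_local (Q := U `&` Pp y)); [exact: openI| split => //; apply/eP => //|].
have sub : U0 `&` (U `&` Pp y) `<=` U0 `&` Dd y.
  by move=> z [uz [_ Pz]]; split => //; apply: CD; apply/(eP z uz).
apply: (ctn_eq (f := tau y)).
- by split => //; split => //; apply/(eP x ux).
- move=> z [uz [Uz Pz]]; symmetry; apply: (th_eq (k := k)); split => //.
    by apply/(eP z uz).
  by apply: HU => //; apply: (units_a hg).
apply: (ctn_sub sub); apply: H2 => //; exact: CD.
Qed.
End P2c.


Unset Implicit Arguments. Set Strict Implicit.

Theorem theorem3p6 (T : topologicalType) (G : groupoid_data T) (F : set T) :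
  etale_groupoid G -> F `<=` units G -> rel_open (units G) F -> full G F ->
  ((exists theta : T -> T,
      {within units G, continuous theta} /\
      (forall x, units G x ->
         [/\ garr G (theta x), grg G (theta x) = x & F (gsr G (theta x))])) ->
    homologically_similar G (reduction G F)) /\
  (sigma_compact (units G) -> totally_disconnected (units G) ->
    homologically_similar G (reduction G F)).
Proof.
move=> he hFu hFo hfull; split.
  by case=> th [hc hth]; exact: (core he hFo hc hth).
move=> hsc htd.
apply: (core he hFo (th := th he hFo hfull htd hsc)).
  by apply/ctnP => x ux; apply: th_ctn.
by move=> x ux; apply: th_good.
Qed.
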